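(* Let $L$ be a $c$-lattice and $S$ a multiplicatively closed subset of $L$ (with $1\in S$, $0\notin S$). Let $q$ be an $S$-$p$-primary element of $L$ and let $x\in L$ be such that $sx\not\le q$ for all $s\in S$. Then $(q:sx)$ is an $S$-primary element of $L$ for every $s\in S$, and there exists $t\in S$ such that $t\sqrt{(q:sx)}\le p\le\sqrt{(q:sx)}$ for all $s\in S$. In particular, $(\sqrt{(q:x)})_S=p_S$.
   Context: A multiplicative lattice is a complete lattice with a commutative, associative multiplication distributing over arbitrary joins, with $1$ as identity; $L_*$ is the set of compact elements. A $c$-lattice is a compactly generated multiplicative lattice with $1$ compact in which the product of two compact elements is compact. A multiplicatively closed subset is a nonempty $S\subseteq L_*$ closed under multiplication. $(a:b)=\bigvee\{y\mid yb\le a\}$; $\sqrt a=\bigvee\{y\in L_*\mid y^n\le a\text{ for some }n\in\mathbb{Z}^+\}$; the $S$-saturation is $a_S=\bigvee\{y\in L\mid sy\le a\text{ for some }s\in S\}$. A proper element $p$ with $t\not\le p$ for all $t\in S$ is $S$-prime if there is $s\in S$ such that $ab\le p$ implies $sa\le p$ or $sb\le p$ for all $a,b$. A proper element $q$ with $t\not\le q$ for all $t\in S$ is $S$-primary if there is $s\in S$ such that $cd\le q$ implies $sc\le q$ or $sd\le\sqrt q$ for all $c,d\in L$; it is $S$-$p$-primary if moreover $p=\sqrt q$ is $S$-prime. *)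

(* Defs.v *)
From Stdlib Require Import List.
Set Implicit Arguments.

Record MultLattice := {
  car :> Type;
  le : car -> car -> Prop;
  sup : (car -> Prop) -> car;
  mul : car -> car -> car;
  le_refl : forall a, le a a;
  le_trans : forall a b c, le a b -> le b c -> le a c;
  le_antisym : forall a b, le a b -> le b a -> a = b;
  sup_ub : forall (P : car -> Prop) x, P x -> le x (sup P);
  sup_least : forall (P : car -> Prop) z, (forall x, P x -> le x z) -> le (sup P) z;
  mul_assoc : forall a b c, mul a (mul b c) = mul (mul a b) c;
  mul_comm : forall a b, mul a b = mul b a;
  mul_one : forall a, mul (sup (fun _ => True)) a = a;
  mul_sup : forall a (P : car -> Prop),
      mul a (sup P) = sup (fun y => exists x, P x /\ y = mul a x)
}.

Arguments le {m} _ _.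
Arguments sup {m} _.
Arguments mul {m} _ _.

Section Defs.
Variable L : MultLattice.

Definition top : L := sup (fun _ => True).
Definition bot : L := sup (fun _ => False).

Definition compact (x : L) : Prop :=
  forall P : L -> Prop, le x (sup P) ->
    exists l : list L, (forall y, In y l -> P y) /\ le x (sup (fun y => In y l)).

Definition compactly_generated : Prop :=
  forall a : L, a = sup (fun y => compact y /\ le y a).

Definition c_lattice : Prop :=
  compactly_generated /\ compact top /\
  (forall a b : L, compact a -> compact b -> compact (mul a b)).

Definition mult_closed (S : L -> Prop) : Prop :=
  (exists s, S s) /\ (forall s, S s -> compact s) /\
  (forall s t, S s -> S t -> S (mul s t)).

Fixpoint pow (y : L) (n : nat) : L :=
  match n with 0 => top | S n' => mul y (pow y n') end.

Definition colon (a b : L) : L := sup (fun y => le (mul y b) a).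

Definition rad (a : L) : L :=
  sup (fun y => compact y /\ exists n, 0 < n /\ le (pow y n) a).

Definition saturation (S : L -> Prop) (a : L) : L :=
  sup (fun y => exists s, S s /\ le (mul s y) a).

Definition proper (a : L) : Prop := a <> top.

Definition S_prime (S : L -> Prop) (p : L) : Prop :=
  proper p /\ (forall t, S t -> ~ le t p) /\
  exists s, S s /\ forall a b : L, le (mul a b) p -> le (mul s a) p \/ le (mul s b) p.

Definition S_primary (S : L -> Prop) (q : L) : Prop :=
  proper q /\ (forall t, S t -> ~ le t q) /\
  exists s, S s /\ forall c d : L, le (mul c d) q -> le (mul s c) q \/ le (mul s d) (rad q).

Definition S_p_primary (S : L -> Prop) (p q : L) : Prop :=
  S_primary S q /\ p = rad q /\ S_prime S p.

End Defs.
Arguments mult_closed {L} S.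
Arguments colon {L} a b.
Arguments rad {L} a.
Arguments saturation {L} S a.
Arguments S_prime {L} S p.
Arguments S_primary {L} S q.
Arguments S_p_primary {L} S p q.
Arguments proper {L} a.
Arguments compact {L} x.
Arguments pow {L} y n.

(* Main.v *)
Require Import Defs.

Section H.
Variable L : MultLattice.

Lemma sup_mono (P Q : L -> Prop) : (forall x, P x -> Q x) -> le (sup P) (sup Q).
Proof. intros H. apply sup_least. intros x Px. apply sup_ub. auto. Qed.

Lemma mul_mono_r (a b c : L) : le b c -> le (mul a b) (mul a c).
Proof.
  intros H.
  assert (E : c = sup (fun y => y = b \/ y = c)).
  { apply le_antisym. apply sup_ub; auto.
    apply sup_least. intros y [->| ->]; auto using le_refl. }
  rewrite E, mul_sup. apply sup_ub. exists b; auto.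
Qed.

Lemma mul_mono_l (a b c : L) : le b c -> le (mul b a) (mul c a).
Proof. intros H. rewrite (mul_comm _ b), (mul_comm _ c). now apply mul_mono_r. Qed.

Lemma mul_top_r (a : L) : mul a (top L) = a.
Proof. rewrite mul_comm. apply mul_one. Qed.

Lemma mul_le_l (a b : L) : le (mul a b) a.
Proof.
  rewrite <- (mul_top_r a) at 2. apply mul_mono_r. apply sup_ub. exact I.
Qed.

Lemma colon_spec (a b : L) : le (mul (colon a b) b) a.
Proof.
  unfold colon. rewrite mul_comm, mul_sup. apply sup_least.
  intros y [z [Hz ->]]. rewrite mul_comm. exact Hz.
Qed.

Lemma colon_intro (a b y : L) : le (mul y b) a -> le y (colon a b).
Proof. intros H. apply sup_ub. exact H. Qed.

Lemma rad_mono (a b : L) : le a b -> le (rad a) (rad b).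
Proof.
  intros H. apply sup_mono. intros y [Hc [n [Hn Hle]]].
  split; auto. exists n. split; auto. eapply le_trans; eauto.
Qed.

Lemma le_colon (q b : L) : le q (colon q b).
Proof. apply colon_intro. apply mul_le_l. Qed.

End H.

Theorem mainTheorem13 (L : MultLattice) (S : L -> Prop) (p q x : L) :
  c_lattice L ->
  mult_closed S -> S (top L) -> ~ S (bot L) ->
  S_p_primary S p q ->
  (forall s, S s -> ~ le (mul s x) q) ->
  (forall s, S s -> S_primary S (colon q (mul s x))) /\
  (exists t, S t /\ forall s, S s ->
      le (mul t (rad (colon q (mul s x)))) p /\ le p (rad (colon q (mul s x)))) /\
  saturation S (rad (colon q x)) = saturation S p.
Proof.
  intros _ [_ [_ Smul]] Stop _ [[Pq [NSq [s0 [Ss0 Hq]]]] [Ep [Pp [NSp [s1 [Ss1 Hp]]]]]] Hx.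
  assert (Hpr : forall s, S s -> le p (rad (colon q (mul s x)))).
  { intros s _. rewrite Ep. apply rad_mono. apply le_colon. }
  assert (Key : forall y n u, S u -> le (mul u (pow y (Datatypes.S n))) p -> le (mul s1 y) p).
  { intros y n. induction n as [|n IH]; intros u Su H.
    - simpl in H. fold (top L) in H. rewrite mul_top_r in H.
      destruct (Hp u y H) as [H1|H1]; auto.
      exfalso. apply (NSp (mul s1 u)); auto.
    - change (pow y (Datatypes.S (Datatypes.S n))) with (mul y (pow y (Datatypes.S n))) in H.
      rewrite (mul_comm _ y), mul_assoc in H.
      destruct (Hp _ _ H) as [H1|H1]; auto.
      rewrite mul_assoc in H1. eapply IH; [|exact H1]. auto. }
  assert (H2 : forall s, S s -> le (mul s1 (rad (colon q (mul s x)))) p).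
  { intros s Ss. unfold rad. rewrite mul_sup. apply sup_least.
    intros z [y [[_ [n [Hn Hle]]] ->]].
    assert (H3 : le (mul (mul s x) (pow y n)) q).
    { rewrite mul_comm. eapply le_trans; [apply mul_mono_l; exact Hle|]. apply colon_spec. }
    destruct (Hq _ _ H3) as [H4|H4].
    - exfalso. rewrite mul_assoc in H4. apply (Hx (mul s0 s)); auto.
    - rewrite <- Ep in H4. destruct n as [|n]; [exfalso; inversion Hn|]. eapply Key; [exact Ss0|exact H4]. }
  split; [|split].
  - intros s Ss. split; [|split].
    + intros E. apply (Hx s Ss). eapply le_trans; [|apply (colon_spec _ q (mul s x))].
      rewrite E. unfold top. rewrite mul_one. apply le_refl.
    + intros t St Ht. apply (Hx (mul t s)); auto.
      rewrite <- mul_assoc. eapply le_trans; [apply mul_mono_l; exact Ht|]. apply colon_spec.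
    + exists s0. split; auto. intros c d Hcd.
      assert (H3 : le (mul (mul c (mul s x)) d) q).
      { rewrite <- mul_assoc, (mul_comm _ (mul s x) d), mul_assoc.
        eapply le_trans; [apply mul_mono_l; exact Hcd|]. apply colon_spec. }
      destruct (Hq _ _ H3) as [H4|H4].
      * left. apply colon_intro. rewrite <- mul_assoc. exact H4.
      * right. eapply le_trans; [exact H4|]. apply rad_mono. apply le_colon.
  - exists s1. split; auto.
  - assert (Ex : mul (top L) x = x) by apply mul_one.
    apply le_antisym.
    + apply sup_mono. intros z [u [Su Hu]]. exists (mul s1 u). split; auto.
      rewrite <- mul_assoc.
      eapply le_trans; [apply mul_mono_r; exact Hu|].
      rewrite <- Ex. apply H2; auto.
    + apply sup_mono. intros z [u [Su Hu]]. exists u. split; auto.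
      eapply le_trans; [exact Hu|]. rewrite <- Ex. apply Hpr; auto.
Qed.
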